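(* Let $\bar\nu\in\Pi_{2,SR}$ be an essentially proper policy of player II in a finite-space SSP game (as in the context) satisfying the Finite-Space SSP Game Model Assumption. Then the single-player problem $\mathrm{SSP}_{\bar\nu}$ satisfies the SSP Model Assumption: there exists a proper policy among its stationary deterministic policies, and every improper stationary deterministic policy incurs infinite cost for at least one initial state.
   Context: Finite-space game: $S=\{1,\dots,n\}$, $S_o=S\cup\{0\}$, $0$ absorbing cost-free termination state. At $i\in S$ players I and II have finite control sets $U(i),V(i)$; under $(u,v)$ the state moves to $j\in S_o$ w.p. $p_{ij}(u,v)$ with transition cost $\hat g(i,u,v,j)$ paid by player I; $g(i,u,v)$ is the expected one-stage cost. $J(i;\pi_1,\pi_2)=\liminf_{t\to\infty}E_{\pi_1\pi_2}[\sum_{k=0}^t\hat g(i_k,u_k,v_k,i_{k+1})\mid i_0=i]$. $\Pi_{1,SR},\Pi_{2,SR}$: stationary randomized policies ($\mu(\cdot\mid i)\in\mathcal P(U(i))$, $\nu(\cdot\mid i)\in\mathcal P(V(i))$). Prolonging pair: for some initial state the termination state is with positive probability never reached; non-prolonging otherwise. $\nu\in\Pi_{2,SR}$ is essentially proper if some $\mu\in\Pi_{1,SR}$ makes $(\mu,\nu)$ non-prolonging and every $\mu\in\Pi_{1,SR}$ with $(\mu,\nu)$ prolonging has $J(i;\mu,\nu)=+\infty$ for some $i$. Finite-Space SSP Game Model Assumption: (i) there is $\bar\mu\in\Pi_{1,SR}$ with $J(i;\bar\mu,\nu)<+\infty$ for all $\nu\in\Pi_{2,SR}$, all $i$; (ii)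 there is $\bar\nu\in\Pi_{2,SR}$ with $J(i;\mu,\bar\nu)>-\infty$ for all $\mu$, all $i$; (iii) every prolonging pair in $\Pi_{1,SR}\times\Pi_{2,SR}$ has $J(i;\mu,\nu)\in\{\pm\infty\}$ for some $i$. $R=\{(i,u,v):i\in S,u\in U(i),v\in V(i)\}$. $\mathrm{SSP}_{\bar\nu}$ is the single-player (player I, cost-minimizing) problem with state space $S_o\cup R$ and cost-free termination state $0$: from $\ell=(i,u,v)\in R$ the system moves (uncontrolled) to $j\in S_o$ w.p. $p_{ij}(u,v)$ with expected one-stage cost $g(i,u,v)$; at $i\in S$ the control set is $U(i)$ and control $u$ moves the system to $j\in S_o$ w.p. $p_{\bar\nu,ij}(u)=\sum_{v\in V(i)}\bar\nu(v\mid i)p_{ij}(u,v)$ with expected one-stage cost $g_{\bar\nu}(i,u)=\sum_{v}\bar\nu(v\mid i)g(i,u,v)$. A policy of a single-player SSP is proper if under it the termination state is reached w.p.1 from every initial state, and improper otherwise; costs of policies are total expected costs (liminf of expected partial sums). *)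

(* Defs.v *)
From HB Require Import structures.
From mathcomp Require Import all_boot all_order all_algebra.
From mathcomp Require Import all_classical all_reals.
From mathcomp Require Import ereal topology normedtype sequences.
Set Implicit Arguments.
Unset Strict Implicit.
Unset Printing Implicit Defensive.
Import Order.TTheory GRing.Theory Num.Theory.
Import numFieldNormedType.Exports.
Local Open Scope ring_scope.
Local Open Scope classical_set_scope.

(* Non-terminal states: finType X; the termination state 0 is implicit  *)
(* (absorbing, cost free).  Q x y = probability to move from x to y in  *)
(* X (the missing mass goes to termination), c x = expected one-stage   *)
(* cost at x.                                                           *)
Section Chain.
Variables (R : realType) (X : finType) (Q : X -> X -> R) (c : X -> R).

Fixpoint Qpow (k : nat) (x y : X) : R :=
  match k with
  | 0 => (x == y)%:R
  | k.+1 => \sum_(z : X) Qpow k x z * Q z y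
  end.

Definition not_term (x : X) (k : nat) : R := \sum_(y : X) Qpow k x y.

Definition chain_proper : Prop :=
  forall x : X, not_term x @ \oo --> (0 : R)%R.

Definition partial_cost (x : X) (t : nat) : R :=
  \sum_(k < t.+1) \sum_(y : X) Qpow k x y * c y.

Definition chain_cost (x : X) : \bar R :=
  limn_einf (fun t => (partial_cost x t)%:E).

End Chain.

(* Finite-space SSP game.  S = 'I_n (states 1..n relabelled 0..n-1),   *)
(* S_o = option 'I_n with None the termination state 0.                 *)
Record game (R : realType) := Game {
  gn : nat;
  gU : finType;
  gV : finType;
  Uad : 'I_gn -> {set gU};
  Vad : 'I_gn -> {set gV};
  gp : 'I_gn -> gU -> gV -> option 'I_gn -> R;
  ghat : 'I_gn -> gU -> gV -> option 'I_gn -> R;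
}.

Section Game.
Variables (R : realType) (G : game R).
Local Notation n := (gn G).
Local Notation U := (gU G).
Local Notation V := (gV G).

Definition game_wf : Prop :=
  forall i : 'I_n,
    (Uad i != finset.set0) /\ (Vad i != finset.set0) /\
    forall u v, u \in Uad i -> v \in Vad i ->
      (forall j, 0 <= gp i u v j) /\ \sum_(j : option 'I_n) gp i u v j = 1.

Definition g1 (i : 'I_n) (u : U) (v : V) : R :=
  \sum_(j : option 'I_n) gp i u v j * ghat i u v j.

Definition pol1_SR (mu : 'I_n -> U -> R) : Prop :=
  forall i, (forall u, 0 <= mu i u) /\ (forall u, u \notin Uad i -> mu i u = 0)
            /\ \sum_(u in Uad i) mu i u = 1.
Definition pol2_SR (nu : 'I_n -> V -> R) : Prop :=
  forall i, (forall v, 0 <= nu i v) /\ (forall v, v \notin Vad i -> nu i v = 0)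
            /\ \sum_(v in Vad i) nu i v = 1.

Definition pairQ (mu : 'I_n -> U -> R) (nu : 'I_n -> V -> R) (i j : 'I_n) : R :=
  \sum_(u in Uad i) \sum_(v in Vad i) mu i u * nu i v * gp i u v (Some j).
Definition pairc (mu : 'I_n -> U -> R) (nu : 'I_n -> V -> R) (i : 'I_n) : R :=
  \sum_(u in Uad i) \sum_(v in Vad i) mu i u * nu i v * g1 i u v.

Definition Jgame mu nu (i : 'I_n) : \bar R := chain_cost (pairQ mu nu) (pairc mu nu) i.

Definition prolonging mu nu : Prop := ~ chain_proper (pairQ mu nu).

Definition ess_proper (nu : 'I_n -> V -> R) : Prop :=
  pol2_SR nu /\
  (exists mu, pol1_SR mu /\ ~ prolonging mu nu) /\
  (forall mu, pol1_SR mu -> prolonging mu nu -> exists i, Jgame mu nu i = +oo%E).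

Definition game_model_assumption : Prop :=
  (exists mub, pol1_SR mub /\
     forall nu, pol2_SR nu -> forall i, (Jgame mub nu i < +oo)%E) /\
  (exists nub, pol2_SR nub /\
     forall mu, pol1_SR mu -> forall i, (-oo < Jgame mu nub i)%E) /\
  (forall mu nu, pol1_SR mu -> pol2_SR nu -> prolonging mu nu ->
     exists i, Jgame mu nu i = +oo%E \/ Jgame mu nu i = -oo%E).

Definition triple_ok (x : 'I_n * U * V) : bool :=
  (x.1.2 \in Uad x.1.1) && (x.2 \in Vad x.1.1).
Definition Rtrip : finType := {x : 'I_n * U * V | triple_ok x}.

Definition Xnu : finType := ('I_n + Rtrip)%type.

(* stationary deterministic policies of SSP_nubar: a control u in U(i) at
   each i in S (states of R are uncontrolled) *)
Definition pol_SD (mu : 'I_n -> U) : Prop := forall i, mu i \in Uad i.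

Definition p_nu (nub : 'I_n -> V -> R) (i : 'I_n) (u : U) (j : option 'I_n) : R :=
  \sum_(v in Vad i) nub i v * gp i u v j.
Definition g_nu (nub : 'I_n -> V -> R) (i : 'I_n) (u : U) : R :=
  \sum_(v in Vad i) nub i v * g1 i u v.

Definition nuQ (nub : 'I_n -> V -> R) (mu : 'I_n -> U) (x y : Xnu) : R :=
  match x, y with
  | inl i, inl j => p_nu nub i (mu i) (Some j)
  | inr l, inl j => gp (val l).1.1 (val l).1.2 (val l).2 (Some j)
  | _, inr _ => 0
  end.
Definition nuc (nub : 'I_n -> V -> R) (mu : 'I_n -> U) (x : Xnu) : R :=
  match x with
  | inl i => g_nu nub i (mu i)
  | inr l => g1 (val l).1.1 (val l).1.2 (val l).2
  end.

Definition SSPnu_proper nub mu : Prop := chain_proper (nuQ nub mu).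
Definition SSPnu_cost nub mu (x : Xnu) : \bar R := chain_cost (nuQ nub mu) (nuc nub mu) x.

Definition SSPnu_model_assumption (nub : 'I_n -> V -> R) : Prop :=
  (exists mu, pol_SD mu /\ SSPnu_proper nub mu) /\
  (forall mu, pol_SD mu -> ~ SSPnu_proper nub mu ->
     exists x : Xnu, SSPnu_cost nub mu x = +oo%E).

End Game.

Arguments g1 {R} G i u v.
Arguments pol1_SR {R} G mu.
Arguments pol2_SR {R} G nu.
Arguments pairQ {R} G mu nu i j.
Arguments pairc {R} G mu nu i.
Arguments Jgame {R} G mu nu i.
Arguments prolonging {R} G mu nu.
Arguments ess_proper {R} G nu.
Arguments pol_SD {R} G mu.
Arguments p_nu {R} G nub i u j.
Arguments g_nu {R} G nub i u.
Arguments nuQ {R} G nub mu x y.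
Arguments nuc {R} G nub mu x.
Arguments SSPnu_proper {R} G nub mu.
Arguments SSPnu_cost {R} G nub mu x.
Arguments SSPnu_model_assumption {R} G nub.

(* Main.v *)
Require Import Defs.
From HB Require Import structures.
From mathcomp Require Import all_boot all_order all_algebra.
From mathcomp Require Import all_classical all_reals.
From mathcomp Require Import ereal topology normedtype sequences.
From mathcomp Require Import lra ring.
Set Implicit Arguments.
Unset Strict Implicit.
Unset Printing Implicit Defensive.
Import Order.TTheory GRing.Theory Num.Theory.
Import numFieldNormedType.Exports.
Local Open Scope ring_scope.
Local Open Scope classical_set_scope.

Section ChainL.
Variables (R : realType) (X : finType) (Q : X -> X -> R).
Hypothesis Q0 : forall x y, 0 <= Q x y.

Lemma Qpow_ge0 k x y : 0 <= Qpow Q k x y.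
Proof.
elim: k x y => [|k IH] x y /=; first by rewrite ler0n.
by apply: sumr_ge0 => z _; rewrite mulr_ge0.
Qed.

Lemma QpowSl k x y : Qpow Q k.+1 x y = \sum_z Q x z * Qpow Q k z y.
Proof.
elim: k x y => [|k IH] x y.
  rewrite /= (bigD1 x) //= eqxx mul1r big1 ?addr0; last first.
    by move=> z /negPf; rewrite eq_sym => ->; rewrite mul0r.
  rewrite (bigD1 y) //= eqxx mulr1 big1 ?addr0 //.
  by move=> z /negPf; rewrite eq_sym => ->; rewrite mulr0.
rewrite (_ : Qpow Q k.+2 x y = \sum_z Qpow Q k.+1 x z * Q z y) //.
rewrite (eq_bigr (fun z => \sum_w Q x w * Qpow Q k w z * Q z y)); last first.
  by move=> z _; rewrite IH big_distrl.
rewrite exchange_big /=; apply: eq_bigr => w _.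
by rewrite big_distrr /=; apply: eq_bigr => z _; rewrite mulrA.
Qed.

Lemma not_termS x k : not_term Q x k.+1 = \sum_y Q x y * not_term Q y k.
Proof.
rewrite /not_term (eq_bigr _ (fun y _ => QpowSl k x y)) exchange_big /=.
by apply: eq_bigr => y _; rewrite big_distrr.
Qed.

Lemma proper_W : chain_proper Q ->
  exists W : X -> R, (forall x, 0 <= W x) /\
    forall x, 2^-1 + \sum_y Q x y * W y <= W x.
Proof.
move=> Hp.
have : \forall k \near \oo, forall x, `|0 - not_term Q x k| < 2^-1.
  apply: filter_forall => x; have := Hp x.
  by move/cvgrPdist_lt; apply; rewrite invr_gt0.
move=> [M _ HM].
have {HM} HM : forall x, not_term Q x M <= 2^-1.
  move=> x; have := HM M (leqnn M) x; rewrite sub0r normrN => /ltW.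
  exact: le_trans (ler_norm _).
exists (fun x => \sum_(k < M) not_term Q x k); split.
  move=> x; apply: sumr_ge0 => k _; apply: sumr_ge0 => y _; exact: Qpow_ge0.
move=> x.
have E : 1 + \sum_y Q x y * \sum_(k < M) not_term Q y k =
   \sum_(k < M) not_term Q x k + not_term Q x M.
  rewrite -(big_ord_recr M (fun k : 'I_M.+1 => not_term Q x k)) /= big_ord_recl /=.
  have -> : not_term Q x 0 = 1.
    rewrite /not_term /= (bigD1 x) //= eqxx big1 ?addr0 //.
    by move=> z /negPf; rewrite eq_sym => ->.
  congr (_ + _).
  rewrite (eq_bigr (fun y => \sum_(k < M) Q x y * not_term Q y k)); last first.
    by move=> y _; rewrite big_distrr.
  rewrite exchange_big /=; apply: eq_bigr => k _; by rewrite not_termS.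
have := HM x; move: E.
set A := \sum_y _; set B := \sum_(k < M) _.
move=> E H; have : A = B + not_term Q x M - 1 by rewrite -E; ring.
move=> ->. lra.
Qed.

Lemma W_proper (W : X -> R) (a : R) : 0 < a -> (forall x, 0 <= W x) ->
  (forall x, a + \sum_y Q x y * W y <= W x) -> chain_proper Q.
Proof.
move=> a0 W0 HW x.
have key : forall m, a * \sum_(k < m) not_term Q x k +
    \sum_y Qpow Q m x y * W y <= W x.
  elim=> [|m IH].
    rewrite big_ord0 mulr0 add0r /= (bigD1 x) //= eqxx mul1r big1 ?addr0 //.
    by move=> z /negPf; rewrite eq_sym => ->; rewrite mul0r.
  apply: le_trans IH; rewrite big_ord_recr /= mulrDr -addrA lerD2l.
  have -> : \sum_y Qpow Q m.+1 x y * W y =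
      \sum_y Qpow Q m x y * \sum_z Q y z * W z.
    rewrite /= (eq_bigr (fun z => \sum_y Qpow Q m x y * Q y z * W z)); last first.
      by move=> z _; rewrite big_distrl.
    rewrite exchange_big /=; apply: eq_bigr => y _.
    rewrite big_distrr; apply: eq_bigr => z _; by rewrite /= mulrA.
  rewrite /not_term big_distrr -big_split /=; apply: ler_sum => y _.
  by rewrite mulrC -mulrDr ler_wpM2l ?Qpow_ge0.
have nt0 : forall k, 0 <= not_term Q x k.
  by move=> k; apply: sumr_ge0 => y _; exact: Qpow_ge0.
apply: cvg_series_cvg_0; apply: nondecreasing_is_cvgn.
  apply/nondecreasing_seqP => m; rewrite /series /= big_nat_recr //=.
  by rewrite lerDl.
exists (W x / a) => _ [m _ <-]; rewrite /series /= big_mkord.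
rewrite ler_pdivlMr // mulrC; apply: le_trans (key m).
rewrite lerDl; apply: sumr_ge0 => y _; rewrite mulr_ge0 ?Qpow_ge0 //.
Qed.
End ChainL.

Lemma argmin_ex (R : realType) (U : finType) (A : {set U}) (F : U -> R) :
  A != finset.set0 -> exists2 u, u \in A & forall u', u' \in A -> F u <= F u'.
Proof.
case/set0Pn => u0 u0A.
case: (@arg_minP _ _ _ u0 (mem A) F u0A) => u uA H.
by exists u.
Qed.

Section GameL.
Variables (R : realType) (G : game R) (nub : 'I_(gn G) -> gV G -> R).
Hypothesis wf : game_wf G.
Hypothesis nubP : pol2_SR G nub.
Local Notation n := (gn G).

Lemma nub0 (i : 'I_n) (v : gV G) : 0 <= nub i v.
Proof. by case: (nubP i). Qed.

Lemma gp0 (i : 'I_n) (u : gU G) (v : gV G) (j : option 'I_n) : u \in Uad i -> v \in Vad i -> 0 <= gp i u v j.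
Proof. by move=> uA vA; case: (wf i) => _ [_ /(_ u v uA vA) [H _]]. Qed.

Lemma pnu0 (i : 'I_n) (u : gU G) (j : option 'I_n) : u \in Uad i -> 0 <= p_nu G nub i u j.
Proof.
by move=> uA; apply: sumr_ge0 => v vA; rewrite mulr_ge0 ?nub0 ?gp0.
Qed.

Lemma nuQ0 mu : pol_SD G mu -> forall x y, 0 <= nuQ G nub mu x y.
Proof.
move=> Hmu [i|l] [j|l'] //=; first exact: pnu0.
by case: l => [[[i u] v]] /= /andP [uA vA]; apply: gp0.
Qed.

Lemma pairQ0 mu : pol1_SR G mu -> forall i j, 0 <= pairQ G mu nub i j.
Proof.
move=> Hmu i j; apply: sumr_ge0 => u uA; apply: sumr_ge0 => v vA.
by rewrite !mulr_ge0 ?nub0 ?gp0 //; case: (Hmu i).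
Qed.

Lemma lift_proper (W : 'I_n -> R) a mu : pol_SD G mu -> 0 < a ->
  (forall i, 0 <= W i) ->
  (forall i, a + \sum_j p_nu G nub i (mu i) (Some j) * W j <= W i) ->
  SSPnu_proper G nub mu.
Proof.
move=> Hmu a0 W0 HW.
pose W' (x : Xnu G) := match x with
  | inl i => W i
  | inr l => a + \sum_j gp (val l).1.1 (val l).1.2 (val l).2 (Some j) * W j end.
apply: (@W_proper _ _ _ (nuQ0 Hmu) W' a a0).
  move=> [i|l] //=; apply: addr_ge0; first exact: ltW.
  apply: sumr_ge0 => j _; rewrite mulr_ge0 //.
  by case: l => [[[i u] v]] /= /andP [uA vA]; apply: gp0.
move=> x; rewrite /Xnu big_sumType /= [X in _ + (_ + X) <= _]big1 ?addr0; last first.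
  by move=> l _; case: x => ? /=; rewrite mul0r.
by case: x => [i|l] /=.
Qed.


Lemma sum_pairQ mu i (W : 'I_n -> R) :
  \sum_j pairQ G mu nub i j * W j =
  \sum_(u in Uad i) mu i u * \sum_j p_nu G nub i u (Some j) * W j.
Proof.
rewrite (eq_bigr (fun j => \sum_(u in Uad i) mu i u * (p_nu G nub i u (Some j) * W j))); last first.
  move=> j _; rewrite /pairQ big_distrl /=; apply: eq_bigr => u _.
  rewrite /p_nu big_distrl mulrA big_distrr big_distrl /=; apply: eq_bigr => v _.
  by rewrite /= !mulrA.
rewrite exchange_big /=; apply: eq_bigr => u _; by rewrite big_distrr.
Qed.

Lemma part1 : (exists mu, pol1_SR G mu /\ ~ prolonging G mu nub) ->
  exists mu, pol_SD G mu /\ SSPnu_proper G nub mu.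
Proof.
move=> [mu [Hmu Hnp]].
have Hp : chain_proper (pairQ G mu nub) by apply: contrapT.
have [W [W0 HW]] := proper_W (pairQ0 Hmu) Hp.
pose F i u := \sum_j p_nu G nub i u (Some j) * W j.
have : forall i, exists u, u \in Uad i /\ forall u', u' \in Uad i -> F i u <= F i u'.
  move=> i; have [UA _] := wf i.
  by have [u uA H] := argmin_ex (F i) UA; exists u.
case/choice => mud Hmud.
exists mud; split; first by move=> i; case: (Hmud i).
apply: (@lift_proper W (2^-1)) => //; first by move=> i; case: (Hmud i).
move=> i; apply: le_trans (HW i); rewrite lerD2l sum_pairQ.
have [_ [_ Hs]] := Hmu i.
have [_ Hmin] := Hmud i.
rewrite -[X in X <= _]mul1r -Hs big_distrl /=; apply: ler_sum => u uA.
rewrite ler_wpM2l ?Hmin //; by case: (Hmu i) => [H _].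
Qed.


Section Det.
Variable mu : 'I_n -> gU G.
Hypothesis Hmu : pol_SD G mu.
Definition mur (i : 'I_n) (u : gU G) : R := (u == mu i)%:R.

Lemma mur_SR : pol1_SR G mur.
Proof.
move=> i; split; first by move=> u; rewrite /mur ler0n.
split.
  move=> u uA; rewrite /mur; case: eqP => // E; by move: uA; rewrite E Hmu.
rewrite (bigD1 (mu i)) ?Hmu //= /mur eqxx big1 ?addr0 //.
by move=> u /andP [_ /negPf ->].
Qed.

Lemma pairQ_mur i j : pairQ G mur nub i j = p_nu G nub i (mu i) (Some j).
Proof.
rewrite /pairQ (bigD1 (mu i)) ?Hmu //= [X in _ + X]big1 ?addr0.
  by apply: eq_bigr => v _; rewrite /mur eqxx mul1r.
move=> u /andP [_ /negPf H]; apply: big1 => v _; by rewrite /mur H !mul0r.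
Qed.

Lemma pairc_mur i : pairc G mur nub i = g_nu G nub i (mu i).
Proof.
rewrite /pairc (bigD1 (mu i)) ?Hmu //= [X in _ + X]big1 ?addr0.
  by apply: eq_bigr => v _; rewrite /mur eqxx mul1r.
move=> u /andP [_ /negPf H]; apply: big1 => v _; by rewrite /mur H !mul0r.
Qed.

Lemma Qpow_lift i k :
  (forall j, Qpow (nuQ G nub mu) k (inl i) (inl j) = Qpow (pairQ G mur nub) k i j) /\
  (forall l, Qpow (nuQ G nub mu) k (inl i) (inr l) = 0).
Proof.
elim: k => [|k [IH1 IH2]]; first by split.
split.
  move=> j; rewrite [LHS]/= /Xnu big_sumType /= [X in _ + X]big1 ?addr0; last first.
    by move=> l _; rewrite IH2 mul0r.
  by apply: eq_bigr => z _; rewrite IH1 pairQ_mur.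
move=> l; rewrite /=; apply: big1 => z _; by case: z => ? /=; rewrite mulr0.
Qed.

Lemma cost_lift i : SSPnu_cost G nub mu (inl i) = Jgame G mur nub i.
Proof.
rewrite /SSPnu_cost /Jgame /chain_cost; congr limn_einf.
apply: funext => t; congr EFin; rewrite /partial_cost; apply: eq_bigr => k _.
rewrite /Xnu big_sumType /= [X in _ + X]big1 ?addr0; last first.
  by move=> l _; have [_ ->] := Qpow_lift i k; rewrite mul0r.
apply: eq_bigr => j _; have [-> _] := Qpow_lift i k; by rewrite pairc_mur.
Qed.

Lemma proper_lift : chain_proper (pairQ G mur nub) -> SSPnu_proper G nub mu.
Proof.
move=> Hp; have [W [W0 HW]] := proper_W (pairQ0 mur_SR) Hp.
apply: (@lift_proper W (2^-1)) => // i.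
by have := HW i; under eq_bigr do rewrite pairQ_mur.
Qed.
End Det.

End GameL.

Theorem lemma4p2 (R : realType) (G : game R) (nubar : 'I_(gn G) -> gV G -> R) :
  game_wf G -> game_model_assumption G -> ess_proper G nubar ->
  SSPnu_model_assumption G nubar.
Proof.
move=> wf _ [nubP [Hex Hinf]]; split; first exact: part1.
move=> mu Hmu Himp.
have Hpro : prolonging G (mur mu) nubar.
  by move=> Hp; apply: Himp; apply: proper_lift.
have [i Hi] := Hinf _ (mur_SR Hmu) Hpro.
by exists (inl i); rewrite cost_lift.
Qed.
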